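(* Let $K\subseteq\mathbb{R}^d$ be compact. The following are equivalent: (a) $(\mathcal{J}^1(K),\|\cdot\|_{\mathcal{J}^1(K)})$ is a Banach space; (b) $(C^1(K),\|\cdot\|_{C^1(K)})$ is a Banach space; (c) for every $x\in K$ there is $C_x>0$ such that for all $f\in C^1(K)$ and all $y\in K\setminus\{x\}$, $\frac{|f(y)-f(x)|}{|y-x|}\le C_x\|f\|_{C^1(K)}$.
   Context: A continuous $df:K\to\mathbb{R}^d$ is a continuous derivative of $f:K\to\mathbb{R}$ on $K$ if $\lim_{y\to x,\,y\in K\setminus\{x\}}\frac{f(y)-f(x)-\langle df(x),y-x\rangle}{|y-x|}=0$ for all $x\in K$. $\mathcal{J}^1(K)=\{(f,df): df \text{ is a continuous derivative of } f \text{ on } K\}$ with norm $\|(f,df)\|_{\mathcal{J}^1(K)}=\|f\|_K+\|df\|_K$ ($\|\cdot\|_K$ the sup norm on $K$). $C^1(K)$ is the projection of $\mathcal{J}^1(K)$ onto the first coordinate, with the quotient norm $\|f\|_{C^1(K)}=\|f\|_K+\inf\{\|df\|_K: df \text{ a continuous derivative of } f\}$. *)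

(* Defs.v *)
From Stdlib Require Import Reals Lra List ClassicalEpsilon.
Open Scope R_scope.

Fixpoint rsum (n : nat) (f : nat -> R) : R :=
  match n with O => 0 | S m => rsum m f + f m end.

(* R^d, represented as real sequences vanishing from index d on *)
Definition Rd (d : nat) : Type := { x : nat -> R | forall i, (d <= i)%nat -> x i = 0 }.
Definition coord {d} (x : Rd d) (i : nat) : R := proj1_sig x i.

Definition vadd {d} (x y : Rd d) : Rd d.
Proof.
  exists (fun i => coord x i + coord y i). intros i Hi. unfold coord.
  rewrite (proj2_sig x i Hi), (proj2_sig y i Hi). ring.
Defined.
Definition vscal {d} (c : R) (x : Rd d) : Rd d.
Proof.
  exists (fun i => c * coord x i). intros i Hi. unfold coord.
  rewrite (proj2_sig x i Hi). ring.
Defined.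
Definition vzero {d} : Rd d.
Proof. exists (fun _ => 0). intros; reflexivity. Defined.
Definition vsub {d} (x y : Rd d) : Rd d := vadd x (vscal (-1) y).
Definition vdot {d} (x y : Rd d) : R := rsum d (fun i => coord x i * coord y i).
Definition vnorm {d} (x : Rd d) : R := sqrt (vdot x x).

Definition open_set {d} (U : Rd d -> Prop) : Prop :=
  forall x, U x -> exists e, e > 0 /\ forall y, vnorm (vsub y x) < e -> U y.
Definition compact_Rd {d} (K : Rd d -> Prop) : Prop :=
  forall (I : Type) (U : I -> Rd d -> Prop),
    (forall i, open_set (U i)) -> (forall x, K x -> exists i, U i x) ->
    exists l : list I, forall x, K x -> exists i, In i l /\ U i x.

Definition KT {d} (K : Rd d -> Prop) : Type := { x : Rd d | K x }.
Definition pt {d} {K : Rd d -> Prop} (x : KT K) : Rd d := proj1_sig x.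

(* supremum / infimum of a set of reals (meaningful when bounded & nonempty) *)
Definition sup_R (E : R -> Prop) : R := epsilon (inhabits 0) (fun s => is_lub E s).
Definition inf_R (E : R -> Prop) : R := - sup_R (fun r => E (- r)).

(* sup norms on K (0 if K is empty) *)
Definition supnorm {d} {K : Rd d -> Prop} (g : KT K -> R) : R :=
  sup_R (fun r => r = 0 \/ exists x, r = Rabs (g x)).
Definition supnormv {d} {K : Rd d -> Prop} (g : KT K -> Rd d) : R :=
  sup_R (fun r => r = 0 \/ exists x, r = vnorm (g x)).

Definition cont_on_v {d} {K : Rd d -> Prop} (g : KT K -> Rd d) : Prop :=
  forall (x : KT K) eps, eps > 0 -> exists delta, delta > 0 /\
    forall y : KT K, vnorm (vsub (pt y) (pt x)) < delta ->
      vnorm (vsub (g y) (g x)) < eps.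

Definition is_cont_deriv {d} {K : Rd d -> Prop} (f : KT K -> R) (df : KT K -> Rd d) : Prop :=
  cont_on_v df /\
  forall (x : KT K) eps, eps > 0 -> exists delta, delta > 0 /\
    forall y : KT K, pt y <> pt x -> vnorm (vsub (pt y) (pt x)) < delta ->
      Rabs (f y - f x - vdot (df x) (vsub (pt y) (pt x))) / vnorm (vsub (pt y) (pt x)) < eps.

Definition BanachSpace {V : Type} (S : V -> Prop) (zero : V) (add : V -> V -> V)
    (scal : R -> V -> V) (N : V -> R) : Prop :=
  (S zero /\ (forall u v, S u -> S v -> S (add u v)) /\ (forall c u, S u -> S (scal c u))) /\
  (N zero = 0 /\ (forall u, S u -> 0 <= N u) /\ (forall u, S u -> N u = 0 -> u = zero) /\
   (forall c u, S u -> N (scal c u) = Rabs c * N u) /\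
   (forall u v, S u -> S v -> N (add u v) <= N u + N v)) /\
  (forall u : nat -> V, (forall n, S (u n)) ->
     (forall eps, eps > 0 -> exists M, forall n m, (M <= n)%nat -> (M <= m)%nat ->
        N (add (u n) (scal (-1) (u m))) < eps) ->
     exists v, S v /\ forall eps, eps > 0 -> exists M, forall n, (M <= n)%nat ->
        N (add (u n) (scal (-1) v)) < eps).

Definition J1 {d} (K : Rd d -> Prop) (p : (KT K -> R) * (KT K -> Rd d)) : Prop :=
  is_cont_deriv (fst p) (snd p).
Definition J1norm {d} (K : Rd d -> Prop) (p : (KT K -> R) * (KT K -> Rd d)) : R :=
  supnorm (fst p) + supnormv (snd p).
Definition J1_Banach {d} (K : Rd d -> Prop) : Prop :=
  BanachSpace (J1 K) (fun _ => 0, fun _ => vzero)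
    (fun p q => (fun x => fst p x + fst q x, fun x => vadd (snd p x) (snd q x)))
    (fun c p => (fun x => c * fst p x, fun x => vscal c (snd p x)))
    (J1norm K).

(* C^1(K) with the quotient norm *)
Definition C1 {d} (K : Rd d -> Prop) (f : KT K -> R) : Prop :=
  exists df, is_cont_deriv f df.
Definition C1norm {d} (K : Rd d -> Prop) (f : KT K -> R) : R :=
  supnorm f + inf_R (fun r => exists df, is_cont_deriv f df /\ r = supnormv df).
Definition C1_Banach {d} (K : Rd d -> Prop) : Prop :=
  BanachSpace (C1 K) (fun _ => 0) (fun f g x => f x + g x) (fun c f x => c * f x)
    (C1norm K).

Definition cond_c {d} (K : Rd d -> Prop) : Prop :=
  forall x : KT K, exists C, C > 0 /\
    forall f : KT K -> R, C1 K f -> forall y : KT K, pt y <> pt x ->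
      Rabs (f y - f x) / vnorm (vsub (pt y) (pt x)) <= C * C1norm K f.

(* Main.v *)
Require Import Defs.
From Stdlib Require Import Reals Lra Lia List ClassicalEpsilon Classical FunctionalExtensionality ProofIrrelevance.
Require Import Defs.
Open Scope R_scope.

Lemma rsum_ext n f g : (forall i, (i < n)%nat -> f i = g i) -> rsum n f = rsum n g.
Proof. induction n; simpl; intros H; auto. rewrite IHn, H; auto; intros; apply H; lia. Qed.
Lemma rsum_plus n f g : rsum n (fun i => f i + g i) = rsum n f + rsum n g.
Proof. induction n; simpl; [ring|rewrite IHn; ring]. Qed.
Lemma rsum_scal n c f : rsum n (fun i => c * f i) = c * rsum n f.
Proof. induction n; simpl; [ring|rewrite IHn; ring]. Qed.
Lemma rsum_nonneg n f : (forall i, (i < n)%nat -> 0 <= f i) -> 0 <= rsum n f.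
Proof. induction n; simpl; intros H; [lra|].
  assert (0 <= f n) by (apply H; lia). assert (0 <= rsum n f) by (apply IHn; intros; apply H; lia). lra. Qed.
Lemma rsum_zero n f : (forall i, (i < n)%nat -> 0 <= f i) -> rsum n f = 0 -> forall i, (i < n)%nat -> f i = 0.
Proof. induction n; simpl; intros H E i Hi; [lia|].
  assert (0 <= f n) by (apply H; lia). assert (0 <= rsum n f) by (apply rsum_nonneg; intros; apply H; lia).
  destruct (Nat.eq_dec i n). subst; lra. apply IHn; try lia. intros; apply H; lia. lra. Qed.
Lemma rsum_quad n u v t : rsum n (fun i => (u i + t * v i) * (u i + t * v i)) =
  rsum n (fun i => u i * u i) + 2 * t * rsum n (fun i => u i * v i) + t * t * rsum n (fun i => v i * v i).
Proof. induction n; simpl; [ring|rewrite IHn; ring]. Qed.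

Lemma cs_rsum n u v : rsum n (fun i => u i * v i) * rsum n (fun i => u i * v i) <=
   rsum n (fun i => u i * u i) * rsum n (fun i => v i * v i).
Proof.
  set (a := rsum n (fun i => u i * u i)). set (b := rsum n (fun i => v i * v i)).
  set (c := rsum n (fun i => u i * v i)).
  assert (Q : forall t, 0 <= a + 2 * t * c + t * t * b).
  { intro t. unfold a, b, c. rewrite <- rsum_quad. apply rsum_nonneg. intros. apply Rle_0_sqr. }
  assert (Ha : 0 <= a) by (unfold a; apply rsum_nonneg; intros; apply Rle_0_sqr).
  assert (Hb : 0 <= b) by (unfold b; apply rsum_nonneg; intros; apply Rle_0_sqr).
  destruct (Req_dec b 0) as [Hb0|Hb0].
  - destruct (Req_dec c 0) as [Hc|Hc]. rewrite Hc, Hb0; lra.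
    exfalso. specialize (Q (- (a + 1) / (2 * c))). rewrite Hb0 in Q.
    replace (2 * (- (a + 1) / (2 * c)) * c) with (-(a+1)) in Q by (field; auto). lra.
  - specialize (Q (- c / b)).
    replace (a + 2 * (- c / b) * c + - c / b * (- c / b) * b) with (a - c * c / b) in Q by (field; auto).
    assert (0 < b) by lra.
    assert (c * c / b <= a) by lra.
    apply Rmult_le_compat_r with (r := b) in H0; [|lra].
    replace (c * c / b * b) with (c*c) in H0 by (field; lra). lra.
Qed.

Lemma abs_le_inv a b : Rabs a <= b -> -b <= a <= b.
Proof. unfold Rabs; destruct Rcase_abs; lra. Qed.

Lemma coord_add {d} (x y : Rd d) i : coord (vadd x y) i = coord x i + coord y i.
Proof. reflexivity. Qed.
Lemma coord_scal {d} (x : Rd d) c i : coord (vscal c x) i = c * coord x i.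
Proof. reflexivity. Qed.
Lemma coord_zero {d} i : coord (@vzero d) i = 0.
Proof. reflexivity. Qed.
Lemma coord_sub {d} (x y : Rd d) i : coord (vsub x y) i = coord x i - coord y i.
Proof. unfold vsub. rewrite coord_add, coord_scal. ring. Qed.
Lemma coord_out {d} (x : Rd d) i : (d <= i)%nat -> coord x i = 0.
Proof. intros; unfold coord; apply (proj2_sig x); auto. Qed.

Lemma vec_ext {d} (x y : Rd d) : (forall i, (i < d)%nat -> coord x i = coord y i) -> x = y.
Proof.
  intros H. destruct x as [x Hx], y as [y Hy]. unfold coord in H; simpl in H.
  assert (x = y). { apply functional_extensionality; intro i. destruct (Nat.lt_ge_cases i d); auto.
    rewrite Hx, Hy; auto. }
  subst. f_equal. apply proof_irrelevance.
Qed.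

Lemma vdot_ext {d} (x y x' y' : Rd d) : (forall i, (i<d)%nat -> coord x i = coord x' i) ->
  (forall i, (i<d)%nat -> coord y i = coord y' i) -> vdot x y = vdot x' y'.
Proof. intros; unfold vdot; apply rsum_ext; intros; rewrite H, H0; auto. Qed.
Lemma vnorm_ext {d} (x x' : Rd d) : (forall i, (i<d)%nat -> coord x i = coord x' i) -> vnorm x = vnorm x'.
Proof. intros; unfold vnorm; f_equal; apply vdot_ext; auto. Qed.

Lemma vdot_self_nonneg {d} (x : Rd d) : 0 <= vdot x x.
Proof. unfold vdot; apply rsum_nonneg; intros; apply Rle_0_sqr. Qed.
Lemma vnorm_nonneg {d} (x : Rd d) : 0 <= vnorm x.
Proof. unfold vnorm; apply sqrt_pos. Qed.
Lemma vnorm_sq {d} (x : Rd d) : vnorm x * vnorm x = vdot x x.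
Proof. unfold vnorm; apply sqrt_sqrt, vdot_self_nonneg. Qed.

Lemma vdot_cs {d} (x y : Rd d) : Rabs (vdot x y) <= vnorm x * vnorm y.
Proof.
  pose proof (cs_rsum d (coord x) (coord y)) as H. fold (vdot x y) in H.
  change (rsum d (fun i => coord x i * coord x i)) with (vdot x x) in H.
  change (rsum d (fun i => coord y i * coord y i)) with (vdot y y) in H.
  rewrite <- !vnorm_sq in H. pose proof (vnorm_nonneg x); pose proof (vnorm_nonneg y).
  replace (vnorm x * vnorm y) with (Rabs (vnorm x * vnorm y)) by (apply Rabs_right; nra).
  apply (Rsqr_le_abs_0 (vdot x y) (vnorm x * vnorm y)). unfold Rsqr. nra.
Qed.

Lemma vdot_comm {d} (x y : Rd d) : vdot x y = vdot y x.
Proof. unfold vdot; apply rsum_ext; intros; ring. Qed.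

Lemma vdot_lin {d} (x y z : Rd d) a b : (forall i, (i<d)%nat -> coord z i = a * coord x i + b * coord y i) ->
  forall w, vdot z w = a * vdot x w + b * vdot y w.
Proof. intros H w. unfold vdot. rewrite <- !rsum_scal, <- rsum_plus. apply rsum_ext; intros; rewrite H; auto; ring. Qed.

Lemma vnorm_triangle {d} (x y z : Rd d) : (forall i, (i<d)%nat -> coord z i = coord x i + coord y i) ->
  vnorm z <= vnorm x + vnorm y.
Proof.
  intros H. pose proof (vnorm_nonneg x); pose proof (vnorm_nonneg y); pose proof (vnorm_nonneg z).
  assert (E : vdot z z = vdot x x + 2 * vdot x y + vdot y y).
  { assert (L : forall w, vdot z w = 1 * vdot x w + 1 * vdot y w) by (apply vdot_lin; intros; rewrite H; auto; ring).
    rewrite L, (vdot_comm x z), (vdot_comm y z), !L, (vdot_comm y x). ring. }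
  pose proof (vdot_cs x y). apply abs_le_inv in H3.
  rewrite <- !vnorm_sq in E. nra.
Qed.

Lemma vnorm_scal {d} (x z : Rd d) c : (forall i, (i<d)%nat -> coord z i = c * coord x i) ->
  vnorm z = Rabs c * vnorm x.
Proof.
  intros H. unfold vnorm. rewrite <- sqrt_Rsqr_abs, <- sqrt_mult_alt by apply Rle_0_sqr. f_equal.
  unfold vdot, Rsqr. rewrite <- rsum_scal. apply rsum_ext; intros; rewrite H; auto; ring.
Qed.

Lemma vnorm_zero_coord {d} (x : Rd d) : vnorm x = 0 -> forall i, (i<d)%nat -> coord x i = 0.
Proof.
  intros H i Hi. assert (vdot x x = 0) by (rewrite <- vnorm_sq, H; ring).
  pose proof (rsum_zero d (fun i => coord x i * coord x i)) as Z.
  assert (coord x i * coord x i = 0) by (apply Z; auto; intros; nra). nra.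
Qed.

Lemma vnorm_coord0 {d} (x : Rd d) : (forall i, (i<d)%nat -> coord x i = 0) -> vnorm x = 0.
Proof. intros H. rewrite (vnorm_ext x vzero) by (intros; rewrite H; auto).
  unfold vnorm, vdot. rewrite (rsum_ext _ _ (fun _ => 0 * 0)) by (intros; reflexivity).
  rewrite rsum_scal, Rmult_0_l. apply sqrt_0. Qed.

Lemma vsub_pos {d} (x y : Rd d) : x <> y -> 0 < vnorm (vsub x y).
Proof.
  intros H. destruct (vnorm_nonneg (vsub x y)) as [|E]; auto. exfalso; apply H.
  apply vec_ext; intros. pose proof (vnorm_zero_coord _ (eq_sym E) i H0). rewrite coord_sub in H1. lra.
Qed.

Lemma vsub_self {d} (x : Rd d) : vnorm (vsub x x) = 0.
Proof. apply vnorm_coord0; intros; rewrite coord_sub; ring. Qed.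

Lemma vdist_tri {d} (a b c : Rd d) : vnorm (vsub a c) <= vnorm (vsub a b) + vnorm (vsub b c).
Proof. apply vnorm_triangle; intros; rewrite !coord_sub; ring. Qed.
Lemma vdist_sym {d} (a b : Rd d) : vnorm (vsub a b) = vnorm (vsub b a).
Proof. rewrite (vnorm_scal (vsub b a) (vsub a b) (-1)). replace (Rabs (-1)) with 1 by (rewrite Rabs_left; lra); ring.
  intros; rewrite !coord_sub; ring. Qed.
Definition snorm {d} {K : Rd d -> Prop} (h : KT K -> R) : R :=
  sup_R (fun r => r = 0 \/ exists x, r = h x).

Lemma snorm_lub {d} {K : Rd d -> Prop} (h : KT K -> R) B : (forall x, h x <= B) ->
  is_lub (fun r => r = 0 \/ exists x, r = h x) (snorm h).
Proof.
  intros HB. unfold snorm, sup_R. apply epsilon_spec.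
  destruct (completeness (fun r => r = 0 \/ exists x, r = h x)) as [m Hm].
  - exists (Rmax B 0). intros r [->|[x ->]]. apply Rmax_r. eapply Rle_trans; [apply HB|apply Rmax_l].
  - exists 0; auto.
  - exists m; auto.
Qed.

Lemma snorm_ge {d} {K : Rd d -> Prop} (h : KT K -> R) B : (forall x, h x <= B) -> forall x, h x <= snorm h.
Proof. intros HB x. destruct (snorm_lub h B HB) as [U _]. apply U. right; eauto. Qed.
Lemma snorm_nonneg {d} {K : Rd d -> Prop} (h : KT K -> R) B : (forall x, h x <= B) -> 0 <= snorm h.
Proof. intros HB. destruct (snorm_lub h B HB) as [U _]. apply U. left; auto. Qed.
Lemma snorm_le {d} {K : Rd d -> Prop} (h : KT K -> R) B : 0 <= B -> (forall x, h x <= B) -> snorm h <= B.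
Proof. intros HB0 HB. destruct (snorm_lub h B HB) as [_ L]. apply L. intros r [->|[x ->]]; auto. Qed.

Lemma inf_props (E : R -> Prop) : (exists e, E e) -> (forall e, E e -> 0 <= e) ->
  (forall e, E e -> inf_R E <= e) /\ 0 <= inf_R E /\
  (forall eps, eps > 0 -> exists e, E e /\ e < inf_R E + eps) /\
  (forall m, (forall e, E e -> m <= e) -> m <= inf_R E).
Proof.
  intros [e0 He0] Hpos. unfold inf_R.
  assert (L : is_lub (fun r => E (- r)) (sup_R (fun r => E (- r)))).
  { unfold sup_R. apply epsilon_spec. destruct (completeness (fun r => E (-r))) as [m Hm].
    - exists 0. intros r Hr. specialize (Hpos _ Hr). unfold is_upper_bound in *. lra.
    - exists (- e0). rewrite Ropp_involutive; auto.
    - exists m; auto. }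
  set (s := sup_R (fun r => E (-r))) in *. destruct L as [U LL].
  split; [|split; [|split]].
  - intros e He. assert (- e <= s) by (apply U; rewrite Ropp_involutive; auto). lra.
  - assert (s <= 0). { apply LL. intros r Hr. specialize (Hpos _ Hr). lra. } lra.
  - intros eps Heps. apply NNPP. intro N.
    assert (s <= s - eps). { apply LL. intros r Hr. destruct (Rle_dec r (s - eps)); auto.
      exfalso. apply N. exists (-r). split; auto. lra. } lra.
  - intros m Hm. assert (s <= -m). { apply LL. intros r Hr. specialize (Hm _ Hr). lra. } lra.
Qed.

Lemma KT_ext {d} {K : Rd d -> Prop} (x y : KT K) : pt x = pt y -> x = y.
Proof. destruct x, y; unfold pt; simpl; intros; subst; f_equal; apply proof_irrelevance. Qed.

Definition Kcont {d} {K : Rd d -> Prop} (g : KT K -> R) : Prop :=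
  forall (x : KT K) eps, eps > 0 -> exists delta, delta > 0 /\
    forall y : KT K, vnorm (vsub (pt y) (pt x)) < delta -> Rabs (g y - g x) < eps.

Fixpoint lmax {A} (h : A -> R) (l : list A) : R :=
  match l with nil => 0 | a :: l => Rmax (h a) (lmax h l) end.
Lemma lmax_ge {A} (h : A -> R) l a : In a l -> h a <= lmax h l.
Proof. induction l; simpl; [tauto|]. intros [->|H]. apply Rmax_l. eapply Rle_trans; [apply IHl; auto| apply Rmax_r]. Qed.

Lemma cont_bounded {d} {K : Rd d -> Prop} (HK : compact_Rd K) (g : KT K -> R) :
  Kcont g -> exists B, forall x, Rabs (g x) <= B.
Proof.
  intros Hc.
  destruct (HK (KT K) (fun x z => exists delta, delta > 0 /\
       (forall y : KT K, vnorm (vsub (pt y) (pt x)) < delta -> Rabs (g y - g x) < 1) /\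
       vnorm (vsub z (pt x)) < delta)) as [l Hl].
  - intros x z [delta [Hd [H1 H2]]]. exists (delta - vnorm (vsub z (pt x))). split; [lra|].
    intros w Hw. exists delta; split; auto; split; auto.
    pose proof (vdist_tri w z (pt x)). lra.
  - intros z Kz. set (x := exist _ z Kz : KT K). exists x.
    destruct (Hc x 1) as [delta [Hd H]]; [lra|]. exists delta; repeat split; auto.
    unfold x, pt; simpl. rewrite vsub_self; auto.
  - exists (lmax (fun i => Rabs (g i) + 1) l). intros x.
    destruct (Hl (pt x) (proj2_sig x)) as [i [Hi [delta [Hd [H1 H2]]]]].
    specialize (H1 x H2). pose proof (lmax_ge (fun i => Rabs (g i) + 1) l i Hi). simpl in H.
    pose proof (Rabs_triang_inv (g x) (g i)). lra.
Qed.

Lemma div_lt_iff a v e : v > 0 -> (a / v < e <-> a < e * v).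
Proof. intros Hv; split; intros H.
  - apply (Rmult_lt_compat_r v) in H; auto. unfold Rdiv in H. rewrite Rmult_assoc, Rinv_l, Rmult_1_r in H; lra.
  - apply (Rmult_lt_reg_r v); auto. unfold Rdiv. rewrite Rmult_assoc, Rinv_l, Rmult_1_r; lra. Qed.
Lemma div_le_iff a v e : v > 0 -> (a / v <= e <-> a <= e * v).
Proof. intros Hv; split; intros H.
  - apply (Rmult_le_compat_r v) in H; [|lra]. unfold Rdiv in H. rewrite Rmult_assoc, Rinv_l, Rmult_1_r in H; lra.
  - apply (Rmult_le_reg_r v); auto. unfold Rdiv. rewrite Rmult_assoc, Rinv_l, Rmult_1_r; lra. Qed.

Lemma div_lt_l a v e : v > 0 -> a / v < e -> a < e * v.
Proof. intros Hv; apply (proj1 (div_lt_iff a v e Hv)). Qed.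
Lemma div_lt_r a v e : v > 0 -> a < e * v -> a / v < e.
Proof. intros Hv; apply (proj2 (div_lt_iff a v e Hv)). Qed.
Lemma div_le_l a v e : v > 0 -> a / v <= e -> a <= e * v.
Proof. intros Hv; apply (proj1 (div_le_iff a v e Hv)). Qed.
Lemma div_le_r a v e : v > 0 -> a <= e * v -> a / v <= e.
Proof. intros Hv; apply (proj2 (div_le_iff a v e Hv)). Qed.

Lemma div_gt_r a v e : v > 0 -> e * v < a -> e < a / v.
Proof. intros Hv H. apply (Rmult_lt_reg_r v); auto. unfold Rdiv. rewrite Rmult_assoc, Rinv_l, Rmult_1_r; lra. Qed.
Lemma div_gt_l a v e : v > 0 -> e < a / v -> e * v < a.
Proof. intros Hv H. apply (Rmult_lt_compat_r v) in H; auto. unfold Rdiv in H. rewrite Rmult_assoc, Rinv_l, Rmult_1_r in H; lra. Qed.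

Lemma vnorm_rev {d} (a b : Rd d) : Rabs (vnorm a - vnorm b) <= vnorm (vsub a b).
Proof.
  assert (vnorm a <= vnorm (vsub a b) + vnorm b) by (apply vnorm_triangle; intros; rewrite coord_sub; ring).
  assert (vnorm b <= vnorm (vsub b a) + vnorm a) by (apply vnorm_triangle; intros; rewrite coord_sub; ring).
  rewrite vdist_sym in H0. apply Rabs_le; lra.
Qed.

Lemma vdot_sub_l {d} (a b w : Rd d) : vdot (vsub a b) w = vdot a w - vdot b w.
Proof. rewrite (vdot_lin a b (vsub a b) 1 (-1)). ring. intros; rewrite coord_sub; ring. Qed.
Lemma vdot_add_l {d} (a b w : Rd d) : vdot (vadd a b) w = vdot a w + vdot b w.
Proof. rewrite (vdot_lin a b (vadd a b) 1 1). ring. intros; rewrite coord_add; ring. Qed.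
Lemma vdot_scal_l {d} (a w : Rd d) c : vdot (vscal c a) w = c * vdot a w.
Proof. rewrite (vdot_lin a a (vscal c a) c 0). ring. intros; rewrite coord_scal; ring. Qed.
Lemma vdot_zero_l {d} (w : Rd d) : vdot vzero w = 0.
Proof. rewrite (vdot_lin w w vzero 0 0). ring. intros; rewrite coord_zero; ring. Qed.

Lemma deriv_cont {d} {K : Rd d -> Prop} (f : KT K -> R) df : is_cont_deriv f df -> Kcont f.
Proof.
  intros [_ Hr] x eps Heps.
  destruct (Hr x 1) as [d1 [Hd1 H1]]; [lra|].
  pose proof (vnorm_nonneg (df x)).
  exists (Rmin d1 (eps / (vnorm (df x) + 2))). split.
  { apply Rmin_pos; auto. apply Rdiv_lt_0_compat; lra. }
  intros y Hy. destruct (classic (pt y = pt x)) as [E|E].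
  { rewrite (KT_ext y x E). rewrite Rminus_diag, Rabs_R0; lra. }
  assert (Hv : vnorm (vsub (pt y) (pt x)) > 0) by (apply vsub_pos; auto).
  set (v := vnorm (vsub (pt y) (pt x))) in *.
  assert (v < d1) by (eapply Rlt_le_trans; [apply Hy|apply Rmin_l]).
  assert (v < eps / (vnorm (df x) + 2)) by (eapply Rlt_le_trans; [apply Hy|apply Rmin_r]).
  specialize (H1 y E H0). apply div_lt_l in H1; auto. fold v in H1.
  pose proof (vdot_cs (df x) (vsub (pt y) (pt x))) as Hcs. fold v in Hcs.
  assert (HH: eps / (vnorm (df x) + 2) * (vnorm (df x) + 2) = eps) by (field; lra).
  assert (Hw : v * (vnorm (df x) + 2) < eps).
  { revert H2 HH. generalize (eps / (vnorm (df x) + 2)). intros. nra. }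
  pose proof (Rabs_triang (f y - f x - vdot (df x) (vsub (pt y) (pt x))) (vdot (df x) (vsub (pt y) (pt x)))) as Ht.
  replace (f y - f x - vdot (df x) (vsub (pt y) (pt x)) + vdot (df x) (vsub (pt y) (pt x))) with (f y - f x) in Ht by ring.
  assert (vnorm (df x) * v + v < eps) by nra. lra.
Qed.

Lemma deriv_bounded {d} {K : Rd d -> Prop} (HK : compact_Rd K) (f : KT K -> R) df : is_cont_deriv f df ->
  (exists B, forall x, Rabs (f x) <= B) /\ (exists B, forall x, vnorm (df x) <= B).
Proof.
  intros H. split. apply cont_bounded; auto. eapply deriv_cont; eauto.
  destruct (cont_bounded HK (fun x => vnorm (df x))) as [B HB].
  - intros x eps Heps. destruct (proj1 H x eps Heps) as [de [Hde Hd]]. exists de; split; auto.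
    intros y Hy. eapply Rle_lt_trans; [apply vnorm_rev|]. auto.
  - exists B. intros x. specialize (HB x). rewrite Rabs_right in HB; auto. apply Rle_ge, vnorm_nonneg.
Qed.

Lemma deriv_add {d} {K : Rd d -> Prop} (f g : KT K -> R) df dg : is_cont_deriv f df -> is_cont_deriv g dg ->
  is_cont_deriv (fun x => f x + g x) (fun x => vadd (df x) (dg x)).
Proof.
  intros [Cf Rf] [Cg Rg]. split.
  - intros x eps Heps. destruct (Cf x (eps/2)) as [d1 [Hd1 H1]]; [lra|].
    destruct (Cg x (eps/2)) as [d2 [Hd2 H2]]; [lra|].
    exists (Rmin d1 d2); split; [apply Rmin_pos; auto|]. intros y Hy.
    assert (vnorm (vsub (vadd (df y) (dg y)) (vadd (df x) (dg x))) <= vnorm (vsub (df y) (df x)) + vnorm (vsub (dg y) (dg x)))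
      by (apply vnorm_triangle; intros; rewrite !coord_sub, !coord_add; ring).
    specialize (H1 y (Rlt_le_trans _ _ _ Hy (Rmin_l _ _))). specialize (H2 y (Rlt_le_trans _ _ _ Hy (Rmin_r _ _))). lra.
  - intros x eps Heps. destruct (Rf x (eps/2)) as [d1 [Hd1 H1]]; [lra|].
    destruct (Rg x (eps/2)) as [d2 [Hd2 H2]]; [lra|].
    exists (Rmin d1 d2); split; [apply Rmin_pos; auto|]. intros y E Hy.
    assert (Hv : vnorm (vsub (pt y) (pt x)) > 0) by (apply vsub_pos; auto).
    specialize (H1 y E (Rlt_le_trans _ _ _ Hy (Rmin_l _ _))). specialize (H2 y E (Rlt_le_trans _ _ _ Hy (Rmin_r _ _))).
    apply div_lt_l in H1; auto. apply div_lt_l in H2; auto. apply div_lt_r; auto.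
    rewrite vdot_add_l.
    pose proof (Rabs_triang (f y - f x - vdot (df x) (vsub (pt y) (pt x))) (g y - g x - vdot (dg x) (vsub (pt y) (pt x)))).
    replace (f y + g y - (f x + g x) - (vdot (df x) (vsub (pt y) (pt x)) + vdot (dg x) (vsub (pt y) (pt x)))) with
     (f y - f x - vdot (df x) (vsub (pt y) (pt x)) + (g y - g x - vdot (dg x) (vsub (pt y) (pt x)))) by ring.
    assert (eps/2 * vnorm (vsub (pt y) (pt x)) + eps/2 * vnorm (vsub (pt y) (pt x)) = eps * vnorm (vsub (pt y) (pt x))) by field.
    lra.
Qed.

Lemma deriv_scal {d} {K : Rd d -> Prop} (f : KT K -> R) df c : is_cont_deriv f df ->
  is_cont_deriv (fun x => c * f x) (fun x => vscal c (df x)).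
Proof.
  intros [Cf Rf]. split.
  - intros x eps Heps. destruct (Cf x (eps/(Rabs c + 1))) as [d1 [Hd1 H1]].
    { apply Rdiv_lt_0_compat; [lra|]. pose proof (Rabs_pos c); lra. }
    exists d1; split; auto. intros y Hy. specialize (H1 y Hy).
    rewrite (vnorm_scal (vsub (df y) (df x)) _ c) by (intros; rewrite !coord_sub, !coord_scal; ring).
    pose proof (Rabs_pos c). assert (HH: eps / (Rabs c + 1) * (Rabs c + 1) = eps) by (field; lra).
    revert H1 HH. generalize (eps / (Rabs c + 1)). intros. pose proof (vnorm_nonneg (vsub (df y) (df x))). nra.
  - intros x eps Heps. destruct (Rf x (eps/(Rabs c + 1))) as [d1 [Hd1 H1]].
    { apply Rdiv_lt_0_compat; [lra|]. pose proof (Rabs_pos c); lra. }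
    exists d1; split; auto. intros y E Hy.
    assert (Hv : vnorm (vsub (pt y) (pt x)) > 0) by (apply vsub_pos; auto).
    specialize (H1 y E Hy). apply div_lt_l in H1; auto. apply div_lt_r; auto.
    rewrite vdot_scal_l.
    replace (c * f y - c * f x - c * vdot (df x) (vsub (pt y) (pt x))) with (c * (f y - f x - vdot (df x) (vsub (pt y) (pt x)))) by ring.
    rewrite Rabs_mult. pose proof (Rabs_pos c).
    assert (HH: eps / (Rabs c + 1) * (Rabs c + 1) = eps) by (field; lra).
    pose proof (Rabs_pos (f y - f x - vdot (df x) (vsub (pt y) (pt x)))).
    revert H1 HH. generalize (eps / (Rabs c + 1)). intros. nra.
Qed.

Lemma deriv_zero {d} {K : Rd d -> Prop} : is_cont_deriv (fun _ : KT K => 0) (fun _ => vzero).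
Proof. split.
  - intros x eps H. exists 1; split; [lra|]. intros. rewrite vsub_self. lra.
  - intros x eps H. exists 1; split; [lra|]. intros y E Hy. rewrite vdot_zero_l.
    replace (0 - 0 - 0) with 0 by ring. rewrite Rabs_R0. unfold Rdiv; rewrite Rmult_0_l; lra.
Qed.

Lemma supnorm_snorm {d} {K : Rd d -> Prop} (f : KT K -> R) : supnorm f = snorm (fun x => Rabs (f x)).
Proof. reflexivity. Qed.
Lemma supnormv_snorm {d} {K : Rd d -> Prop} (f : KT K -> Rd d) : supnormv f = snorm (fun x => vnorm (f x)).
Proof. reflexivity. Qed.

Lemma snorm_ext {d} {K : Rd d -> Prop} (h h' : KT K -> R) : (forall x, h x = h' x) -> snorm h = snorm h'.
Proof. intros H. replace h' with h; auto. apply functional_extensionality; auto. Qed.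

Lemma le_eps a b : (forall eps, eps > 0 -> a <= b + eps) -> a <= b.
Proof. intros H. destruct (Rle_dec a b); auto. exfalso. specialize (H ((a - b)/2)). lra. Qed.

Lemma snorm_scale {d} {K : Rd d -> Prop} (h : KT K -> R) c : (exists B, forall x, h x <= B) -> (forall x, 0 <= h x) ->
  snorm (fun x => Rabs c * h x) = Rabs c * snorm h.
Proof.
  intros [B HB] Hp. pose proof (Rabs_pos c).
  pose proof (snorm_ge h B HB). pose proof (snorm_nonneg h B HB).
  assert (HB' : forall x, Rabs c * h x <= Rabs c * B) by (intros; apply Rmult_le_compat_l; auto).
  apply Rle_antisym.
  - apply snorm_le. nra. intros x. apply Rmult_le_compat_l; auto.
  - destruct (Req_dec (Rabs c) 0) as [E|E].
    + rewrite E, Rmult_0_l. apply (snorm_nonneg _ 0); intros; lra.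
    + pose proof (snorm_ge _ _ HB') as G. pose proof (snorm_nonneg _ _ HB').
      assert (Hs : snorm h <= snorm (fun x => Rabs c * h x) / Rabs c).
      { apply snorm_le. unfold Rdiv; apply Rmult_le_pos; [lra|]; apply Rlt_le, Rinv_0_lt_compat; lra.
        intros x. specialize (G x); cbv beta in G.
        apply (Rmult_le_reg_l (Rabs c)); [lra|].
        field_simplify; auto. }
      apply (Rmult_le_compat_l (Rabs c)) in Hs; auto. field_simplify in Hs; auto.
Qed.


Lemma sup_f_ge {d} {K : Rd d -> Prop} (HK : compact_Rd K) (f : KT K -> R) (df : KT K -> Rd d) : is_cont_deriv f df ->
  (forall x, Rabs (f x) <= supnorm f) /\ 0 <= supnorm f /\ (forall x, vnorm (df x) <= supnormv df) /\ 0 <= supnormv df.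
Proof.
  intros H. destruct (deriv_bounded HK f df H) as [[B1 H1] [B2 H2]].
  repeat split.
  - apply (snorm_ge (fun x => Rabs (f x)) B1); auto.
  - apply (snorm_nonneg (fun x => Rabs (f x)) B1); auto.
  - apply (snorm_ge (fun x => vnorm (df x)) B2); auto.
  - apply (snorm_nonneg (fun x => vnorm (df x)) B2); auto.
Qed.

Lemma supnorm_le {d} {K : Rd d -> Prop} (f : KT K -> R) B : 0 <= B -> (forall x, Rabs (f x) <= B) -> supnorm f <= B.
Proof. intros; apply (snorm_le (fun x => Rabs (f x))); auto. Qed.
Lemma supnormv_le {d} {K : Rd d -> Prop} (f : KT K -> Rd d) B : 0 <= B -> (forall x, vnorm (f x) <= B) -> supnormv f <= B.
Proof. intros; apply (snorm_le (fun x => vnorm (f x))); auto. Qed.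

Definition Eset {d} {K : Rd d -> Prop} (f : KT K -> R) : R -> Prop :=
  fun r => exists df, is_cont_deriv f df /\ r = supnormv df.

Lemma C1norm_unfold {d} {K : Rd d -> Prop} (f : KT K -> R) : C1norm K f = supnorm f + inf_R (Eset f).
Proof. reflexivity. Qed.

Lemma Eset_props {d} {K : Rd d -> Prop} (HK : compact_Rd K) (f : KT K -> R) : C1 K f ->
  (forall e, Eset f e -> inf_R (Eset f) <= e) /\ 0 <= inf_R (Eset f) /\
  (forall eps, eps > 0 -> exists e, Eset f e /\ e < inf_R (Eset f) + eps).
Proof.
  intros [df Hdf]. destruct (inf_props (Eset f)) as [A [B [C _]]]; auto.
  - exists (supnormv df); exists df; auto.
  - intros e [dg [Hg ->]]. apply (sup_f_ge HK f dg Hg).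
Qed.

Lemma N_nonneg {d} {K : Rd d -> Prop} (HK : compact_Rd K) (f : KT K -> R) : C1 K f -> 0 <= C1norm K f.
Proof. intros H. pose proof (Eset_props HK f H). destruct H as [df Hdf].
  pose proof (sup_f_ge HK f df Hdf). rewrite C1norm_unfold. tauto || lra. Qed.

Lemma N_ge_sup {d} {K : Rd d -> Prop} (HK : compact_Rd K) (f : KT K -> R) : C1 K f -> supnorm f <= C1norm K f /\ forall x, Rabs (f x) <= C1norm K f.
Proof. intros H. pose proof (Eset_props HK f H) as [_ [P _]]. destruct H as [df Hdf].
  pose proof (sup_f_ge HK f df Hdf) as [Q _]. rewrite C1norm_unfold. split; [lra|]. intros x; specialize (Q x); lra. Qed.

Lemma N_le {d} {K : Rd d -> Prop} (HK : compact_Rd K) (f : KT K -> R) (df : KT K -> Rd d) : is_cont_deriv f df -> C1norm K f <= supnorm f + supnormv df.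
Proof. intros H. assert (C1 K f) by (exists df; auto). pose proof (Eset_props HK f H0) as [P _].
  rewrite C1norm_unfold. specialize (P (supnormv df) (ex_intro _ df (conj H eq_refl))). lra. Qed.

Lemma N_approx {d} {K : Rd d -> Prop} (HK : compact_Rd K) (f : KT K -> R) : C1 K f -> forall eps, eps > 0 ->
  exists df, is_cont_deriv f df /\ supnorm f + supnormv df < C1norm K f + eps.
Proof. intros H eps Heps. pose proof (Eset_props HK f H) as [_ [_ P]]. destruct (P eps Heps) as [e [[df [Hd ->]] He]].
  exists df; split; auto. rewrite C1norm_unfold. lra. Qed.

Lemma supnorm_scal {d} {K : Rd d -> Prop} (HK : compact_Rd K) (f : KT K -> R) (df : KT K -> Rd d) c : is_cont_deriv f df ->
  supnorm (fun x => c * f x) = Rabs c * supnorm f /\ supnormv (fun x => vscal c (df x)) = Rabs c * supnormv df.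
Proof.
  intros H. destruct (deriv_bounded HK f df H) as [[B1 H1] [B2 H2]]. split.
  - rewrite !supnorm_snorm. rewrite <- snorm_scale; eauto. apply snorm_ext; intros; apply Rabs_mult.
    intros; apply Rabs_pos.
  - rewrite !supnormv_snorm. rewrite <- snorm_scale; eauto. apply snorm_ext; intros. apply vnorm_scal.
    intros; apply coord_scal. intros; apply vnorm_nonneg.
Qed.

Lemma supnorm_add {d} {K : Rd d -> Prop} (HK : compact_Rd K) (f g : KT K -> R) (df dg : KT K -> Rd d) : is_cont_deriv f df -> is_cont_deriv g dg ->
  supnorm (fun x => f x + g x) <= supnorm f + supnorm g /\
  supnormv (fun x => vadd (df x) (dg x)) <= supnormv df + supnormv dg.
Proof.
  intros Hf Hg. pose proof (sup_f_ge HK f df Hf) as [A1 [A2 [A3 A4]]]. pose proof (sup_f_ge HK g dg Hg) as [B1 [B2 [B3 B4]]].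
  split.
  - apply supnorm_le; [lra|]. intros x. eapply Rle_trans; [apply Rabs_triang|]. specialize (A1 x); specialize (B1 x); lra.
  - apply supnormv_le; [lra|]. intros x. eapply Rle_trans; [apply (vnorm_triangle (df x) (dg x))|].
    intros; apply coord_add. specialize (A3 x); specialize (B3 x); lra.
Qed.

Lemma supnorm_zero {d} {K : Rd d -> Prop} : supnorm (fun _ : KT K => 0) = 0 /\ supnormv (fun _ : KT K => @vzero d) = 0.
Proof. split.
  - apply Rle_antisym. apply supnorm_le; [lra|]. intros; rewrite Rabs_R0; lra.
    apply (snorm_nonneg (fun x : KT K => Rabs 0) 0). intros; rewrite Rabs_R0; lra.
  - assert (Z : vnorm (@vzero d) = 0) by (apply vnorm_coord0; intros; apply coord_zero).
    apply Rle_antisym. apply supnormv_le; [lra|]. intros; rewrite Z; lra.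
    apply (snorm_nonneg (fun x : KT K => vnorm (@vzero d)) 0). intros; rewrite Z; lra.
Qed.

Lemma Rabs_eq_0 r : Rabs r <= 0 -> r = 0.
Proof. unfold Rabs; destruct Rcase_abs; lra. Qed.

Lemma N_scal_le {d} {K : Rd d -> Prop} (HK : compact_Rd K) (u : KT K -> R) c : C1 K u ->
  C1norm K (fun x => c * u x) <= Rabs c * C1norm K u.
Proof.
  intros Hu. apply le_eps. intros eps Heps.
  destruct (N_approx HK u Hu (eps / (Rabs c + 1))) as [df [Hdf Hlt]].
  { apply Rdiv_lt_0_compat; [lra|]. pose proof (Rabs_pos c); lra. }
  pose proof (N_le HK _ _ (deriv_scal u df c Hdf)).
  destruct (supnorm_scal HK u df c Hdf) as [E1 E2]. rewrite E1, E2 in H.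
  pose proof (Rabs_pos c).
  assert (HH: Rabs c * (eps / (Rabs c + 1)) <= eps).
  { apply (Rmult_le_reg_r (Rabs c + 1)); [lra|]. field_simplify; lra. }
  assert (Rabs c * (supnorm u + supnormv df) <= Rabs c * (C1norm K u + eps / (Rabs c + 1))) by
    (apply Rmult_le_compat_l; lra).
  lra.
Qed.

Lemma C1_zero {d} {K : Rd d -> Prop} : C1 K (fun _ => 0).
Proof. exists (fun _ => vzero). apply deriv_zero. Qed.
Lemma C1_add {d} {K : Rd d -> Prop} (u v : KT K -> R) : C1 K u -> C1 K v -> C1 K (fun x => u x + v x).
Proof. intros [du Hu] [dv Hv]. eexists. apply deriv_add; eauto. Qed.
Lemma C1_scal {d} {K : Rd d -> Prop} c (u : KT K -> R) : C1 K u -> C1 K (fun x => c * u x).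
Proof. intros [du Hu]. eexists. apply deriv_scal; eauto. Qed.

Lemma N_zero {d} {K : Rd d -> Prop} (HK : compact_Rd K) : C1norm K (fun _ : KT K => 0) = 0.
Proof.
  apply Rle_antisym; [|apply N_nonneg; auto; apply C1_zero].
  pose proof (N_le HK _ _ (@deriv_zero d K)). destruct (@supnorm_zero d K) as [A B]. lra.
Qed.

Lemma N_scal {d} {K : Rd d -> Prop} (HK : compact_Rd K) c (u : KT K -> R) : C1 K u ->
  C1norm K (fun x => c * u x) = Rabs c * C1norm K u.
Proof.
  intros Hu. apply Rle_antisym. apply N_scal_le; auto.
  destruct (Req_dec c 0) as [E|E].
  - subst. rewrite Rabs_R0, Rmult_0_l. apply N_nonneg; auto. apply C1_scal; auto.
  - pose proof (N_scal_le HK (fun x => c * u x) (/ c) (C1_scal c u Hu)).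
    cbv beta in H. replace (fun x => / c * (c * u x)) with u in H.
    2:{ apply functional_extensionality; intros; field; auto. }
    rewrite Rabs_inv in H. pose proof (Rabs_pos c). assert (Rabs c > 0) by (apply Rabs_pos_lt; auto).
    apply (Rmult_le_compat_l (Rabs c)) in H; [|lra].
    replace (Rabs c * (/ Rabs c * C1norm K (fun x => c * u x))) with (C1norm K (fun x => c * u x)) in H by (field; lra). lra.
Qed.

Lemma N_triangle {d} {K : Rd d -> Prop} (HK : compact_Rd K) (u v : KT K -> R) : C1 K u -> C1 K v ->
  C1norm K (fun x => u x + v x) <= C1norm K u + C1norm K v.
Proof.
  intros Hu Hv. apply le_eps. intros eps Heps.
  destruct (N_approx HK u Hu (eps/2)) as [du [Hdu Lu]]; [lra|].
  destruct (N_approx HK v Hv (eps/2)) as [dv [Hdv Lv]]; [lra|].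
  pose proof (N_le HK _ _ (deriv_add u v du dv Hdu Hdv)).
  destruct (supnorm_add HK u v du dv Hdu Hdv). lra.
Qed.

Lemma N_def {d} {K : Rd d -> Prop} (HK : compact_Rd K) (u : KT K -> R) : C1 K u -> C1norm K u = 0 -> u = (fun _ => 0).
Proof.
  intros Hu E. apply functional_extensionality; intros x. destruct (N_ge_sup HK u Hu) as [_ H].
  specialize (H x). rewrite E in H. pose proof (Rabs_pos (u x)).
  apply Rabs_eq_0. lra.
Qed.

Lemma J1_props {d} {K : Rd d -> Prop} (HK : compact_Rd K) :
  (J1 K (fun _ => 0, fun _ => vzero) /\
   (forall p q, J1 K p -> J1 K q -> J1 K (fun x => fst p x + fst q x, fun x => vadd (snd p x) (snd q x))) /\
   (forall c p, J1 K p -> J1 K (fun x => c * fst p x, fun x => vscal c (snd p x)))) /\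
  (J1norm K (fun _ => 0, fun _ => vzero) = 0 /\ (forall p, J1 K p -> 0 <= J1norm K p) /\
   (forall p, J1 K p -> J1norm K p = 0 -> p = (fun _ => 0, fun _ => vzero)) /\
   (forall c p, J1 K p -> J1norm K (fun x => c * fst p x, fun x => vscal c (snd p x)) = Rabs c * J1norm K p) /\
   (forall p q, J1 K p -> J1 K q -> J1norm K (fun x => fst p x + fst q x, fun x => vadd (snd p x) (snd q x))
        <= J1norm K p + J1norm K q)).
Proof.
  unfold J1, J1norm; simpl. split; [split; [|split]|split; [|split; [|split; [|split]]]].
  - apply deriv_zero.
  - intros [f df] [g dg]; simpl; apply deriv_add.
  - intros c [f df]; simpl; apply deriv_scal.
  - destruct (@supnorm_zero d K); lra.
  - intros [f df] H; simpl in *. pose proof (sup_f_ge HK f df H); lra.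
  - intros [f df] H E; simpl in *. pose proof (sup_f_ge HK f df H) as [A1 [A2 [A3 A4]]].
    f_equal; apply functional_extensionality; intros x.
    + specialize (A1 x). apply Rabs_eq_0. lra.
    + specialize (A3 x). apply vec_ext; intros i Hi. rewrite coord_zero. apply vnorm_zero_coord; auto.
      pose proof (vnorm_nonneg (df x)). lra.
  - intros c [f df] H; simpl in *. destruct (supnorm_scal HK f df c H) as [E1 E2]. rewrite E1, E2; ring.
  - intros [f df] [g dg] Hf Hg; simpl in *. destruct (supnorm_add HK f g df dg Hf Hg). lra.
Qed.

Definition lim (a : nat -> R) : R := epsilon (inhabits 0) (fun l => Un_cv a l).
Lemma lim_spec a : Cauchy_crit a -> Un_cv a (lim a).
Proof. intros H. unfold lim. apply epsilon_spec. destruct (R_complete a H) as [l Hl]. eauto. Qed.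

Lemma cv_const c : Un_cv (fun _ => c) c.
Proof. intros eps H. exists 0%nat. intros. unfold Rdist. rewrite Rminus_diag, Rabs_R0; auto. Qed.

Lemma rsum_cv n (a : nat -> nat -> R) (l : nat -> R) : (forall i, (i < n)%nat -> Un_cv (fun m => a m i) (l i)) ->
  Un_cv (fun m => rsum n (a m)) (rsum n l).
Proof. induction n; simpl; intros H. apply cv_const.
  apply CV_plus. apply IHn; intros; apply H; lia. apply H; lia. Qed.

Lemma lim_le (a : nat -> R) l M e : Un_cv a l -> (forall m, (M <= m)%nat -> a m <= e) -> l <= e.
Proof. intros Hc H. apply le_eps. intros eta Heta. destruct (Hc eta Heta) as [N HN].
  specialize (HN (max M N) ltac:(lia)). specialize (H (max M N) ltac:(lia)). unfold Rdist in HN.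
  apply Rlt_le, abs_le_inv in HN. lra. Qed.

Lemma lim_close (a : nat -> R) l M c e : Un_cv a l -> (forall m, (M <= m)%nat -> Rabs (c - a m) <= e) -> Rabs (c - l) <= e.
Proof. intros Hc H. apply le_eps. intros eta Heta. destruct (Hc eta Heta) as [N HN].
  specialize (HN (max M N) ltac:(lia)). specialize (H (max M N) ltac:(lia)). unfold Rdist in HN.
  pose proof (Rabs_triang (c - a (max M N)) (a (max M N) - l)).
  replace (c - a (max M N) + (a (max M N) - l)) with (c - l) in H0 by ring. lra. Qed.

Lemma rsum_ge_term n f i : (i < n)%nat -> (forall j, (j < n)%nat -> 0 <= f j) -> f i <= rsum n f.
Proof. induction n; simpl; intros Hi H; [lia|].
  assert (0 <= rsum n f) by (apply rsum_nonneg; intros; apply H; lia).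
  destruct (Nat.eq_dec i n). subst; lra. assert (0 <= f n) by (apply H; lia).
  assert (f i <= rsum n f) by (apply IHn; [lia|intros; apply H; lia]). lra. Qed.

Lemma coord_le_norm {d} (v : Rd d) i : Rabs (coord v i) <= vnorm v.
Proof.
  destruct (Nat.lt_ge_cases i d).
  - unfold vnorm. rewrite <- sqrt_Rsqr_abs. apply sqrt_le_1_alt. unfold Rsqr, vdot.
    apply (rsum_ge_term d (fun i => coord v i * coord v i)); auto. intros; apply Rle_0_sqr.
  - rewrite coord_out, Rabs_R0; auto. apply vnorm_nonneg.
Qed.

Definition limv {d} (w : nat -> Rd d) : Rd d.
Proof. exists (fun i => if Compare_dec.lt_dec i d then lim (fun n => coord (w n) i) else 0).
  intros i Hi. destruct (Compare_dec.lt_dec i d); auto. lia. Defined.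

Lemma limv_spec {d} (w : nat -> Rd d) : (forall eps, eps > 0 -> exists M, forall n m, (M <= n)%nat -> (M <= m)%nat -> vnorm (vsub (w n) (w m)) < eps) ->
  forall i, (i < d)%nat -> Un_cv (fun n => coord (w n) i) (coord (limv w) i).
Proof.
  intros H i Hi. unfold limv, coord at 2; simpl. destruct (Compare_dec.lt_dec i d); [|lia].
  apply lim_spec. intros eps Heps. destruct (H eps Heps) as [M HM]. exists M. intros n m Hn Hm.
  unfold Rdist. eapply Rle_lt_trans; [|apply (HM n m); auto]. rewrite <- coord_sub. apply coord_le_norm.
Qed.

Lemma limv_close {d} (w : nat -> Rd d) a M e : (forall i, (i < d)%nat -> Un_cv (fun n => coord (w n) i) (coord (limv w) i)) ->
  (forall m, (M <= m)%nat -> vnorm (vsub a (w m)) <= e) -> vnorm (vsub a (limv w)) <= e.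
Proof.
  intros Hc H. assert (He : 0 <= e) by (eapply Rle_trans; [apply (vnorm_nonneg (vsub a (w M)))|apply (H M); lia]).
  assert (Hs : vdot (vsub a (limv w)) (vsub a (limv w)) <= e * e).
  { apply (lim_le (fun m => vdot (vsub a (w m)) (vsub a (w m))) _ M).
    - unfold vdot. apply rsum_cv. intros i Hi.
      assert (Hi' : Un_cv (fun m => coord (vsub a (w m)) i) (coord (vsub a (limv w)) i)).
      { apply CV_plus; [apply cv_const|]. apply (CV_mult (fun _ => -1) _ (-1)); [apply cv_const|apply Hc; auto]. }
      apply (CV_mult _ _ _ _ Hi' Hi').
    - intros m Hm. rewrite <- vnorm_sq. pose proof (H m Hm). pose proof (vnorm_nonneg (vsub a (w m))). nra. }
  rewrite <- vnorm_sq in Hs. pose proof (vnorm_nonneg (vsub a (limv w))). nra.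
Qed.

Definition pdiff {d} {K : Rd d -> Prop} (p q : (KT K -> R) * (KT K -> Rd d)) : (KT K -> R) * (KT K -> Rd d) :=
  (fun x => fst p x + -1 * fst q x, fun x => vadd (snd p x) (vscal (-1) (snd q x))).

Lemma J1_diff_bound {d} {K : Rd d -> Prop} (HK : compact_Rd K) p q : J1 K p -> J1 K q ->
  (forall x, Rabs (fst p x - fst q x) <= J1norm K (pdiff p q)) /\
  (forall x, vnorm (vsub (snd p x) (snd q x)) <= J1norm K (pdiff p q)) /\ J1 K (pdiff p q) /\
  0 <= J1norm K (pdiff p q).
Proof.
  intros Hp Hq. assert (H : J1 K (pdiff p q)).
  { unfold J1, pdiff; simpl. apply deriv_add; auto. apply deriv_scal; auto. }
  pose proof (sup_f_ge HK _ _ H) as [A1 [A2 [A3 A4]]]. unfold J1norm.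
  split; [|split; [|split]]; auto; try lra.
  - intros x. specialize (A1 x). specialize (A3 x). unfold pdiff in *; simpl in *.
    replace (fst p x - fst q x) with (fst p x + -1 * fst q x) by ring. lra.
  - intros x. specialize (A1 x). specialize (A3 x). unfold pdiff in *; simpl in *. unfold vsub. lra.
Qed.

Lemma c_to_J1 {d} {K : Rd d -> Prop} (HK : compact_Rd K) : cond_c K ->
  forall u : nat -> (KT K -> R) * (KT K -> Rd d), (forall n, J1 K (u n)) ->
  (forall eps, eps > 0 -> exists M, forall n m, (M <= n)%nat -> (M <= m)%nat -> J1norm K (pdiff (u n) (u m)) < eps) ->
  exists v, J1 K v /\ forall eps, eps > 0 -> exists M, forall n, (M <= n)%nat -> J1norm K (pdiff (u n) v) < eps.
Proof.
  intros Hc u Hu Hcau.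
  set (f := fun n => fst (u n)). set (g := fun n => snd (u n)).
  assert (Hd : forall n m, (forall x, Rabs (f n x - f m x) <= J1norm K (pdiff (u n) (u m))) /\
     (forall x, vnorm (vsub (g n x) (g m x)) <= J1norm K (pdiff (u n) (u m))) /\ J1 K (pdiff (u n) (u m)))
    by (intros n m; destruct (J1_diff_bound HK (u n) (u m) (Hu n) (Hu m)) as [A [B [C _]]]; auto).
  set (F := fun x => lim (fun n => f n x)).
  assert (HF : forall x, Un_cv (fun n => f n x) (F x)).
  { intros x. apply lim_spec. intros eps Heps. destruct (Hcau eps Heps) as [M HM]. exists M.
    intros n m Hn Hm. unfold Rdist. eapply Rle_lt_trans; [apply (proj1 (Hd n m))|]. apply HM; auto. }
  set (G := fun x => limv (fun n => g n x)).
  assert (HG : forall x i, (i < d)%nat -> Un_cv (fun n => coord (g n x) i) (coord (G x) i)).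
  { intros x. apply limv_spec. intros eps Heps. destruct (Hcau eps Heps) as [M HM]. exists M.
    intros n m Hn Hm. eapply Rle_lt_trans; [apply (proj1 (proj2 (Hd n m)))|]. apply HM; auto. }
  assert (Hunif : forall eps, eps > 0 -> exists M, forall n, (M <= n)%nat -> forall x,
     Rabs (f n x - F x) <= eps /\ vnorm (vsub (g n x) (G x)) <= eps).
  { intros eps Heps. destruct (Hcau eps Heps) as [M HM]. exists M. intros n Hn x. split.
    - apply (lim_close (fun m => f m x) _ M); auto. intros m Hm.
      apply Rlt_le. eapply Rle_lt_trans; [apply (proj1 (Hd n m))|]. apply HM; auto.
    - apply (limv_close (fun m => g m x) _ M); auto. intros m Hm.
      apply Rlt_le. eapply Rle_lt_trans; [apply (proj1 (proj2 (Hd n m)))|]. apply HM; auto. }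
  assert (HJ : is_cont_deriv F G).
  { split.
    - intros x eps Heps. destruct (Hunif (eps/3)) as [M HM]; [lra|].
      destruct (proj1 (Hu M) x (eps/3)) as [de [Hde Hc1]]; [lra|]. exists de; split; auto.
      intros y Hy. specialize (Hc1 y Hy). fold g in Hc1. fold (g M) in Hc1.
      destruct (HM M (le_n _) y) as [_ A1]. destruct (HM M (le_n _) x) as [_ A2].
      rewrite vdist_sym in A1.
      pose proof (vdist_tri (G y) (g M y) (G x)). pose proof (vdist_tri (g M y) (g M x) (G x)). lra.
    - intros x eps Heps. destruct (Hc x) as [C [HC HCb]].
      set (eta := eps / (2 * (C + 3))).
      assert (Heta : eta > 0) by (unfold eta; apply Rdiv_lt_0_compat; lra).
      destruct (Hunif eta Heta) as [M1 HM1]. destruct (Hcau eta Heta) as [M2 HM2].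
      set (n := max M1 M2).
      destruct (proj2 (Hu n) x eta Heta) as [de [Hde Hr]]. exists de; split; auto.
      intros y E Hy. set (v := vnorm (vsub (pt y) (pt x))).
      assert (Hv : v > 0) by (apply vsub_pos; auto).
      specialize (Hr y E Hy). apply div_lt_l in Hr; auto. fold f in Hr. fold (f n) in Hr. fold g in Hr. fold (g n) in Hr.
      assert (HB : Rabs ((f n y - f n x) - (F y - F x)) <= C * eta * v).
      { apply (lim_close (fun m => f m y - f m x) _ M2).
        - apply CV_minus; auto.
        - intros m Hm.
          assert (Hc1 : C1 K (fun z => f n z + -1 * f m z)).
          { exists (fun z => vadd (g n z) (vscal (-1) (g m z))). apply (proj2 (proj2 (Hd n m))). }
          specialize (HCb _ Hc1 y E). apply div_le_l in HCb; auto.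
          pose proof (N_le HK _ _ (proj2 (proj2 (Hd n m)))).
          assert (J1norm K (pdiff (u n) (u m)) < eta) by (apply HM2; unfold n; lia).
          unfold J1norm, pdiff in H0, H; simpl in H0, H. fold f g in H, H0. fold (f n) (f m) (g n) (g m) in H, H0.
          replace (f n y - f n x - (f m y - f m x)) with (f n y + -1 * f m y - (f n x + -1 * f m x)) by ring.
          assert (C * C1norm K (fun z => f n z + -1 * f m z) <= C * eta) by (apply Rmult_le_compat_l; lra).
          fold v in HCb. nra. }
      destruct (HM1 n ltac:(unfold n; lia) x) as [_ HC3].
      pose proof (vdot_cs (vsub (g n x) (G x)) (vsub (pt y) (pt x))) as HCS. fold v in HCS.
      rewrite vdot_sub_l in HCS.
      apply div_lt_r; auto.
      pose proof (Rabs_triang ((f n y - f n x - vdot (g n x) (vsub (pt y) (pt x))) - ((f n y - f n x) - (F y - F x)))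
                  (vdot (g n x) (vsub (pt y) (pt x)) - vdot (G x) (vsub (pt y) (pt x)))) as T1.
      pose proof (Rabs_triang (f n y - f n x - vdot (g n x) (vsub (pt y) (pt x))) (- ((f n y - f n x) - (F y - F x)))) as T2.
      rewrite Rabs_Ropp in T2.
      replace (f n y - f n x - vdot (g n x) (vsub (pt y) (pt x)) - (f n y - f n x - (F y - F x)) +
        (vdot (g n x) (vsub (pt y) (pt x)) - vdot (G x) (vsub (pt y) (pt x)))) with (F y - F x - vdot (G x) (vsub (pt y) (pt x))) in T1 by ring.
      replace (f n y - f n x - vdot (g n x) (vsub (pt y) (pt x)) + - (f n y - f n x - (F y - F x))) with
        (f n y - f n x - vdot (g n x) (vsub (pt y) (pt x)) - (f n y - f n x - (F y - F x))) in T2 by ring.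
      assert (vnorm (vsub (g n x) (G x)) * v <= eta * v) by (apply Rmult_le_compat_r; lra).
      assert (eta * v + C * eta * v + eta * v < eps * v).
      { assert (eta * (C + 2) < eps). { unfold eta. apply (Rmult_lt_reg_r (2 * (C+3))); [lra|].
          field_simplify; try lra. nra. }
        nra. }
      fold v in Hr |- *. lra. }
  exists (F, G). split; [exact HJ|].
  intros eps Heps. destruct (Hunif (eps/4)) as [M HM]; [lra|]. exists M. intros n Hn.
  unfold J1norm, pdiff; simpl.
  assert (supnorm (fun x => fst (u n) x + -1 * F x) <= eps/4).
  { apply supnorm_le; [lra|]. intros x. destruct (HM n Hn x) as [A _].
    replace (fst (u n) x + -1 * F x) with (f n x - F x) by (unfold f; ring). auto. }
  assert (supnormv (fun x => vadd (snd (u n) x) (vscal (-1) (G x))) <= eps/4).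
  { apply supnormv_le; [lra|]. intros x. destruct (HM n Hn x) as [_ A]. exact A. }
  lra.
Qed.

Lemma half_small eps : eps > 0 -> exists N, forall n, (N <= n)%nat -> (1/2)^n < eps.
Proof. intros H. destruct (pow_lt_1_zero (1/2)) with (y := eps) as [N HN]; auto.
  rewrite Rabs_right; lra. exists N. intros n Hn. specialize (HN n Hn).
  rewrite Rabs_right in HN; auto. apply Rle_ge, pow_le; lra. Qed.
Lemma half_pos n : 0 < (1/2)^n.
Proof. apply pow_lt; lra. Qed.

Lemma half_mono k b : (k <= b)%nat -> (1/2)^b <= (1/2)^k.
Proof. induction 1. lra. simpl. pose proof (half_pos m). lra. Qed.

Lemma choice_nat {A} (inh : A) (P : nat -> A -> Prop) : (forall k, exists a, P k a) -> exists h, forall k, P k (h k).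
Proof. intros H. exists (fun k => epsilon (inhabits inh) (P k)). intros k. apply epsilon_spec. auto. Qed.

Definition cdiff {d} {K : Rd d -> Prop} (f g : KT K -> R) : KT K -> R := fun x => f x + -1 * g x.

Fixpoint nk (Mk : nat -> nat) (k : nat) : nat :=
  match k with O => Mk O | S k => max (nk Mk k) (Mk (S k)) end.
Lemma nk_ge Mk k : (Mk k <= nk Mk k)%nat.
Proof. destruct k; simpl; lia. Qed.
Lemma nk_mono Mk k p : (k <= p)%nat -> (nk Mk k <= nk Mk p)%nat.
Proof. induction 1; auto. simpl; lia. Qed.

Fixpoint Eseq {d} {K : Rd d -> Prop} (D0 : KT K -> Rd d) (D : nat -> KT K -> Rd d) (k : nat) : KT K -> Rd d :=
  match k with O => D0 | S k => fun x => vadd (Eseq D0 D k x) (D k x) end.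

Lemma J1_to_C1 {d} {K : Rd d -> Prop} (HK : compact_Rd K) :
  (forall u : nat -> (KT K -> R) * (KT K -> Rd d), (forall n, J1 K (u n)) ->
  (forall eps, eps > 0 -> exists M, forall n m, (M <= n)%nat -> (M <= m)%nat -> J1norm K (pdiff (u n) (u m)) < eps) ->
  exists v, J1 K v /\ forall eps, eps > 0 -> exists M, forall n, (M <= n)%nat -> J1norm K (pdiff (u n) v) < eps) ->
  forall u : nat -> (KT K -> R), (forall n, C1 K (u n)) ->
  (forall eps, eps > 0 -> exists M, forall n m, (M <= n)%nat -> (M <= m)%nat -> C1norm K (cdiff (u n) (u m)) < eps) ->
  exists v, C1 K v /\ forall eps, eps > 0 -> exists M, forall n, (M <= n)%nat -> C1norm K (cdiff (u n) v) < eps.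
Proof.
  intros HJ u Hu Hcau.
  assert (Cd : forall f g : KT K -> R, C1 K f -> C1 K g -> C1 K (cdiff f g)).
  { intros f g Hf Hg. apply C1_add; auto. apply C1_scal; auto. }
  destruct (choice_nat 0%nat (fun k M => forall n m, (M <= n)%nat -> (M <= m)%nat -> C1norm K (cdiff (u n) (u m)) < (1/2)^k))
    as [Mk HMk].
  { intros k. apply Hcau. apply half_pos. }
  set (n_ := nk Mk).
  assert (Hn : forall k p, (k <= p)%nat -> (Mk k <= n_ p)%nat).
  { intros k p Hkp. pose proof (nk_ge Mk k). pose proof (nk_mono Mk k p Hkp). unfold n_; lia. }
  set (h := fun k => cdiff (u (n_ (S k))) (u (n_ k))).
  assert (Hh : forall k, C1 K (h k) /\ C1norm K (h k) < (1/2)^k).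
  { intros k. split. apply Cd; auto. apply HMk; apply Hn; lia. }
  destruct (choice_nat (fun _ => vzero) (fun k D => is_cont_deriv (h k) D /\ supnorm (h k) + supnormv D < (1/2)^k)) as [D HD].
  { intros k. destruct (Hh k) as [A B]. destruct (N_approx HK (h k) A ((1/2)^k - C1norm K (h k))) as [D [HD1 HD2]]. lra.
    exists D; split; auto. lra. }
  destruct (Hu (n_ 0%nat)) as [D0 HD0].
  set (E := Eseq D0 D).
  assert (HE : forall k, is_cont_deriv (u (n_ k)) (E k)).
  { induction k. exact HD0. simpl.
    replace (u (n_ (S k))) with (fun x => u (n_ k) x + h k x).
    apply deriv_add; auto. apply HD.
    apply functional_extensionality; intros x. unfold h, cdiff. ring. }
  assert (HDb : forall k x, vnorm (D k x) <= (1/2)^k).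
  { intros k x. destruct (HD k) as [A B]. pose proof (sup_f_ge HK _ _ A) as [_ [P [Q _]]]. specialize (Q x). lra. }
  assert (HEb : forall q p x, (q <= p)%nat -> vnorm (vsub (E p x) (E q x)) <= 2 * (1/2)^q - 2 * (1/2)^p).
  { intros q p x Hqp. induction Hqp.
    - rewrite vsub_self; lra.
    - simpl. eapply Rle_trans. apply (vnorm_triangle (vsub (E m x) (E q x)) (D m x)).
      intros; change (E (S m) x) with (vadd (E m x) (D m x)); rewrite !coord_sub, coord_add; ring.
      specialize (HDb m x). lra. }
  assert (HEb' : forall k p q x, (k <= p)%nat -> (k <= q)%nat -> vnorm (vsub (E p x) (E q x)) <= 2 * (1/2)^k).
  { intros k p q x Hp Hq. assert (G : forall a b, (k <= b)%nat -> (b <= a)%nat -> vnorm (vsub (E a x) (E b x)) <= 2 * (1/2)^k).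
    { intros a b Hb Hab. eapply Rle_trans. apply HEb; auto. pose proof (half_pos a).
      pose proof (half_mono k b Hb). lra. }
    destruct (Nat.le_ge_cases q p). apply G; auto. rewrite vdist_sym. apply G; auto. }
  set (U := fun k => (u (n_ k), E k)).
  assert (HU : forall k, J1 K (U k)) by (intros; apply HE).
  destruct (HJ U HU) as [[F G] [HFG Hconv]].
  { intros eps Heps. destruct (half_small (eps/3)) as [k Hk]; [lra|]. exists k. intros p q Hp Hq.
    unfold J1norm, pdiff, U; simpl.
    assert (A : supnorm (fun x => u (n_ p) x + -1 * u (n_ q) x) < (1/2)^k).
    { pose proof (N_ge_sup HK (cdiff (u (n_ p)) (u (n_ q))) (Cd _ _ (Hu _) (Hu _))) as [P _].
      eapply Rle_lt_trans; [apply P|]. apply HMk; apply Hn; auto. }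
    assert (B : supnormv (fun x => vadd (E p x) (vscal (-1) (E q x))) <= 2 * (1/2)^k).
    { apply supnormv_le. pose proof (half_pos k); lra. intros x. apply HEb'; auto. }
    specialize (Hk k (le_n _)). lra. }
  exists F. split. exists G; exact HFG.
  intros eps Heps. destruct (half_small (eps/2)) as [N1 HN1]; [lra|]. destruct (Hconv (eps/2)) as [N2 HN2]; [lra|].
  set (k := max N1 N2). exists (Mk k). intros n Hnk.
  assert (CF : C1 K F) by (exists G; exact HFG).
  replace (cdiff (u n) F) with (fun x => cdiff (u n) (u (n_ k)) x + cdiff (u (n_ k)) F x).
  2: { apply functional_extensionality; intros x; unfold cdiff; ring. }
  eapply Rle_lt_trans. apply N_triangle; auto.
  assert (A : C1norm K (cdiff (u n) (u (n_ k))) < eps / 2).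
  { eapply Rlt_le_trans. apply HMk; [exact Hnk | apply Hn; lia]. apply Rlt_le, HN1. unfold k; lia. }
  assert (B : C1norm K (cdiff (u (n_ k)) F) < eps / 2).
  { destruct (J1_diff_bound HK (U k) (F, G) (HU k) HFG) as [_ [_ [P _]]].
    pose proof (N_le HK _ _ P). unfold pdiff, U in H; simpl in H.
    eapply Rle_lt_trans. apply H. specialize (HN2 k ltac:(unfold k; lia)). unfold J1norm, pdiff, U in HN2; simpl in HN2. exact HN2. }
  lra.
Qed.

Definition vd {d} {K : Rd d -> Prop} (x y : KT K) : R := vnorm (vsub (pt y) (pt x)).

Definition step {d} {K : Rd d -> Prop} (x : KT K) (pk : R -> (KT K -> R) * KT K) (n : nat) (p : (KT K -> R) * R)
  : (KT K -> R) * R :=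
  let s := fst p in let M := snd p in
  let r := (1/2)^(S n) / M in
  let f := fst (pk (INR (S n) / r)) in let y := snd (pk (INR (S n) / r)) in
  let c := r / C1norm K f in
  let sg := if Rle_dec (Rabs (c * f y - c * f x)) (Rabs ((s y + c * f y) - (s x + c * f x))) then 1 else -1 in
  (fun z => s z + sg * (c * f z), Rmax M (2 / vd x y)).

Fixpoint st {d} {K : Rd d -> Prop} (x : KT K) (pk : R -> (KT K -> R) * KT K) (n : nat) : (KT K -> R) * R :=
  match n with O => (fun _ => 0, 1) | S n => step x pk n (st x pk n) end.

Definition yk {d} {K : Rd d -> Prop} (x : KT K) (pk : R -> (KT K -> R) * KT K) (n : nat) : KT K :=
  snd (pk (INR (S n) / ((1/2)^(S n) / snd (st x pk n)))).

Lemma sign_lemma a b : Rabs (a + b) < Rabs b -> Rabs b <= Rabs (a + -1 * b).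
Proof. intros H. pose proof (Rabs_triang (a + b) (- (a + -1 * b))). rewrite Rabs_Ropp in H0.
  replace (a + b + - (a + -1 * b)) with (2 * b) in H0 by ring. rewrite Rabs_mult, Rabs_right in H0 by lra. lra. Qed.

Lemma step_props {d} {K : Rd d -> Prop} (HK : compact_Rd K) (x : KT K) pk
  (Hpk : forall C, C > 0 -> C1 K (fst (pk C)) /\ pt (snd (pk C)) <> pt x /\
      Rabs (fst (pk C) (snd (pk C)) - fst (pk C) x) / vd x (snd (pk C)) > C * C1norm K (fst (pk C))) n :
  C1 K (fst (st x pk n)) -> snd (st x pk n) >= 1 ->
  C1 K (fst (st x pk (S n))) /\ snd (st x pk (S n)) >= snd (st x pk n) /\
  snd (st x pk (S n)) >= 2 / vd x (yk x pk n) /\ pt (yk x pk n) <> pt x /\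
  C1norm K (cdiff (fst (st x pk (S n))) (fst (st x pk n))) <= (1/2)^(S n) / snd (st x pk n) /\
  Rabs (fst (st x pk (S n)) (yk x pk n) - fst (st x pk (S n)) x) / vd x (yk x pk n) > INR (S n).
Proof.
  intros Hs HM. unfold yk. simpl st. unfold step.
  set (s := fst (st x pk n)) in *. set (M := snd (st x pk n)) in *.
  set (r := (1/2)^(S n) / M).
  assert (Hr : r > 0) by (unfold r; apply Rdiv_lt_0_compat; [apply half_pos|lra]).
  set (C := INR (S n) / r).
  assert (HC : C > 0) by (unfold C; apply Rdiv_lt_0_compat; auto; apply lt_0_INR; lia).
  destruct (Hpk C HC) as [Hf [Hy Hq]].
  set (f := fst (pk C)) in *. set (y := snd (pk C)) in *.
  assert (Hv : vd x y > 0) by (apply vsub_pos; auto).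
  assert (HNf : C1norm K f > 0).
  { destruct (N_nonneg HK f Hf) as [|E]; auto. exfalso. rewrite <- E in Hq.
    rewrite (N_def HK f Hf (eq_sym E)) in Hq. rewrite Rminus_diag, Rabs_R0 in Hq. unfold Rdiv in Hq. lra. }
  set (c := r / C1norm K f).
  assert (Hc : c > 0) by (unfold c; apply Rdiv_lt_0_compat; auto).
  set (sg := if Rle_dec (Rabs (c * f y - c * f x)) (Rabs ((s y + c * f y) - (s x + c * f x))) then 1 else -1).
  assert (Hsg : Rabs sg = 1) by (unfold sg; destruct Rle_dec; [rewrite Rabs_R1|rewrite Rabs_left]; lra).
  simpl fst; simpl snd.
  split; [|split; [|split; [|split; [|split]]]].
  - apply C1_add; auto. apply C1_scal, C1_scal; auto.
  - apply Rle_ge, Rmax_l.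
  - apply Rle_ge, Rmax_r.
  - auto.
  - replace (cdiff (fun z => s z + sg * (c * f z)) s) with (fun z => sg * (c * f z)).
    2: { apply functional_extensionality; intros; unfold cdiff; ring. }
    rewrite N_scal, N_scal, Hsg; auto. 2: apply C1_scal; auto.
    rewrite Rabs_right by lra. unfold c. fold M. fold r. right. field. lra.
  - apply div_gt_r; auto.
    assert (H1 : C * C1norm K f * vd x y < Rabs (f y - f x)) by (apply div_gt_l; auto).
    assert (H2 : Rabs (c * f y - c * f x) = c * Rabs (f y - f x)).
    { replace (c * f y - c * f x) with (c * (f y - f x)) by ring. rewrite Rabs_mult, Rabs_right; lra. }
    assert (H3 : c * (C * C1norm K f * vd x y) = INR (S n) * vd x y).
    { unfold c, C. field. split; lra. }
    assert (H4 : INR (S n) * vd x y < Rabs (c * f y - c * f x)).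
    { rewrite H2, <- H3. apply Rmult_lt_compat_l; auto. }
    assert (H5 : Rabs (c * f y - c * f x) <= Rabs (s y + sg * (c * f y) - (s x + sg * (c * f x)))).
    { unfold sg. destruct Rle_dec as [L|L].
      - replace (s y + 1 * (c * f y) - (s x + 1 * (c * f x))) with (s y + c * f y - (s x + c * f x)) by ring. auto.
      - apply Rnot_le_lt in L. pose proof (sign_lemma (s y - s x) (c * f y - c * f x)).
        replace (s y + -1 * (c * f y) - (s x + -1 * (c * f x))) with (s y - s x + -1 * (c * f y - c * f x)) by ring.
        apply H. replace (s y - s x + (c * f y - c * f x)) with (s y + c * f y - (s x + c * f x)) by ring. auto. }
    lra.
Qed.

Lemma choice_gen {B A} (inh : A) (P : B -> A -> Prop) : (forall k, exists a, P k a) -> exists h, forall k, P k (h k).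
Proof. intros H. exists (fun k => epsilon (inhabits inh) (P k)). intros k. apply epsilon_spec. auto. Qed.

Lemma quot_bounded {d} {K : Rd d -> Prop} (HK : compact_Rd K) (f : KT K -> R) df x : is_cont_deriv f df ->
  exists B, forall y, pt y <> pt x -> Rabs (f y - f x) <= B * vd x y.
Proof.
  intros H. destruct (deriv_bounded HK f df H) as [[Bf HBf] _].
  destruct (proj2 H x 1) as [de [Hde Hr]]; [lra|].
  pose proof (vnorm_nonneg (df x)). assert (0 <= Bf) by (specialize (HBf x); pose proof (Rabs_pos (f x)); lra).
  exists (1 + vnorm (df x) + 2 * Bf / de). intros y E.
  assert (Hv : vd x y > 0) by (apply vsub_pos; auto). unfold vd in *.
  assert (0 <= 2 * Bf / de) by (apply Rmult_le_pos; [lra|apply Rlt_le, Rinv_0_lt_compat; lra]).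
  destruct (Rlt_dec (vnorm (vsub (pt y) (pt x))) de) as [L|L].
  - specialize (Hr y E L). apply div_lt_l in Hr; auto.
    pose proof (vdot_cs (df x) (vsub (pt y) (pt x))).
    pose proof (Rabs_triang (f y - f x - vdot (df x) (vsub (pt y) (pt x))) (vdot (df x) (vsub (pt y) (pt x)))).
    replace (f y - f x - vdot (df x) (vsub (pt y) (pt x)) + vdot (df x) (vsub (pt y) (pt x))) with (f y - f x) in H4 by ring.
    nra.
  - apply Rnot_lt_le in L. pose proof (Rabs_triang (f y) (- f x)) as T. rewrite Rabs_Ropp in T.
    pose proof (HBf y). pose proof (HBf x).
    assert (2 * Bf <= 2 * Bf / de * vnorm (vsub (pt y) (pt x))).
    { replace (2 * Bf) with (2 * Bf / de * de) at 1 by (field; lra). apply Rmult_le_compat_l; auto. }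
    unfold Rminus. nra.
Qed.

Lemma N_sym {d} {K : Rd d -> Prop} (HK : compact_Rd K) (f g : KT K -> R) : C1 K f -> C1 K g ->
  C1norm K (cdiff f g) = C1norm K (cdiff g f).
Proof. intros Hf Hg. replace (cdiff g f) with (fun z => -1 * cdiff f g z).
  rewrite N_scal; auto. rewrite Rabs_left by lra. ring. unfold cdiff; apply C1_add; auto; apply C1_scal; auto.
  apply functional_extensionality; intros; unfold cdiff; ring. Qed.

Lemma N_cdiff_tri {d} {K : Rd d -> Prop} (HK : compact_Rd K) (a b c : KT K -> R) : C1 K a -> C1 K b -> C1 K c ->
  C1norm K (cdiff a c) <= C1norm K (cdiff a b) + C1norm K (cdiff b c).
Proof. intros Ha Hb Hc. replace (cdiff a c) with (fun z => cdiff a b z + cdiff b c z).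
  apply N_triangle; auto; unfold cdiff; apply C1_add; auto; apply C1_scal; auto.
  apply functional_extensionality; intros; unfold cdiff; ring. Qed.

Lemma inv_le_div a M M' : 0 <= a -> 0 < M' -> M' <= M -> a / M <= a / M'.
Proof. intros. unfold Rdiv. apply Rmult_le_compat_l; auto. apply Rinv_le_contravar; auto. Qed.

Lemma C1_to_c {d} {K : Rd d -> Prop} (HK : compact_Rd K) :
  (forall u : nat -> (KT K -> R), (forall n, C1 K (u n)) ->
  (forall eps, eps > 0 -> exists M, forall n m, (M <= n)%nat -> (M <= m)%nat -> C1norm K (cdiff (u n) (u m)) < eps) ->
  exists v, C1 K v /\ forall eps, eps > 0 -> exists M, forall n, (M <= n)%nat -> C1norm K (cdiff (u n) v) < eps) ->
  cond_c K.
Proof.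
  intros Hcomp x. apply NNPP; intros Hneg.
  destruct (choice_gen ((fun _ => 0), x) (fun C (p : (KT K -> R) * KT K) => C > 0 -> C1 K (fst p) /\ pt (snd p) <> pt x /\
      Rabs (fst p (snd p) - fst p x) / vd x (snd p) > C * C1norm K (fst p))) as [pk Hpk].
  { intros C. destruct (Rlt_dec 0 C) as [HC|HC].
    - apply NNPP; intros N. apply Hneg. exists C; split; auto. intros f Hf y E.
      apply Rnot_lt_le. intros L. apply N. exists (f, y). intros _. simpl. auto.
    - exists ((fun _ => 0), x). intros; lra. }
  set (S_ := fun n => fst (st x pk n)). set (M_ := fun n => snd (st x pk n)).
  assert (Inv : forall n, C1 K (S_ n) /\ M_ n >= 1).
  { induction n. split. apply C1_zero. unfold M_; simpl; lra.
    destruct IHn as [A B]. destruct (step_props HK x pk Hpk n A B) as [P1 [P2 _]]. split; auto. unfold M_ in *; lra. }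
  assert (SP : forall n, C1 K (S_ (S n)) /\ M_ (S n) >= M_ n /\ M_ (S n) >= 2 / vd x (yk x pk n) /\ pt (yk x pk n) <> pt x /\
     C1norm K (cdiff (S_ (S n)) (S_ n)) <= (1/2)^(S n) / M_ n /\
     Rabs (S_ (S n) (yk x pk n) - S_ (S n) x) / vd x (yk x pk n) > INR (S n)).
  { intros n. destruct (Inv n). apply step_props; auto. }
  assert (Mmono : forall q p, (q <= p)%nat -> M_ q <= M_ p).
  { induction 1. lra. destruct (SP m) as [_ [A _]]. lra. }
  assert (CB : forall q p, (q <= p)%nat -> C1norm K (cdiff (S_ p) (S_ q)) <= ((1/2)^q - (1/2)^p) / M_ q).
  { intros q p Hqp. induction Hqp.
    - replace (cdiff (S_ q) (S_ q)) with (fun _ : KT K => 0). rewrite N_zero; auto. right; unfold Rdiv; ring.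
      apply functional_extensionality; intros; unfold cdiff; ring.
    - eapply Rle_trans. apply (N_cdiff_tri HK _ (S_ m)); apply Inv || apply SP.
      destruct (SP m) as [_ [_ [_ [_ [A _]]]]]. destruct (Inv q) as [_ Mq].
      assert ((1/2)^(S m) / M_ m <= (1/2)^(S m) / M_ q).
      { apply inv_le_div. apply Rlt_le, half_pos. lra. auto. }
      assert (E : ((1/2)^q - (1/2)^(S m)) / M_ q = ((1/2)^q - (1/2)^m) / M_ q + (1/2)^(S m) / M_ q)
        by (simpl; field; lra).
      rewrite E. lra. }
  assert (CB2 : forall q p, (q <= p)%nat -> C1norm K (cdiff (S_ p) (S_ q)) <= (1/2)^q).
  { intros q p H. eapply Rle_trans. apply CB; auto. destruct (Inv q) as [_ Mq]. pose proof (half_pos p).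
    pose proof (half_pos q). pose proof (half_mono q p H). apply (Rle_trans _ (((1 / 2) ^ q - (1 / 2) ^ p) / 1)).
    apply inv_le_div; lra. unfold Rdiv; rewrite Rinv_1; lra. }
  destruct (Hcomp S_) as [s [Hs Hconv]].
  { intros n; apply Inv. }
  { intros eps Heps. destruct (half_small eps Heps) as [k Hk]. exists k. intros n m Hn Hm.
    destruct (Nat.le_ge_cases m n).
    - eapply Rle_lt_trans. apply CB2; eauto. apply Hk; auto.
    - rewrite N_sym; auto; try apply Inv. eapply Rle_lt_trans. apply CB2; eauto. apply Hk; auto. }
  assert (Tail : forall n, C1norm K (cdiff s (S_ (S n))) <= (1/2)^(S n) / M_ (S n)).
  { intros n. apply le_eps. intros eta Heta. destruct (Hconv eta Heta) as [p0 Hp0].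
    set (p := max p0 (S n)).
    eapply Rle_trans. apply (N_cdiff_tri HK _ (S_ p)); auto; apply Inv.
    rewrite N_sym; auto; try apply Inv. pose proof (Hp0 p ltac:(unfold p; lia)).
    pose proof (CB (S n) p ltac:(unfold p; lia)). pose proof (half_pos p).
    assert (((1 / 2) ^ S n - (1 / 2) ^ p) / M_ (S n) <= (1 / 2) ^ S n / M_ (S n)).
    { destruct (Inv (S n)) as [_ HM]. unfold Rdiv. apply Rmult_le_compat_r. apply Rlt_le, Rinv_0_lt_compat; lra. lra. }
    lra. }
  destruct (Hs) as [ds Hds]. destruct (quot_bounded HK s ds x Hds) as [B HB].
  destruct (INR_unbounded B) as [n Hn].
  destruct (SP n) as [C1n [_ [M2 [Ey [_ Qn]]]]].
  set (y := yk x pk n) in *.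
  assert (Hv : vd x y > 0) by (apply vsub_pos; auto).
  apply div_gt_l in Qn; auto.
  specialize (HB y Ey).
  set (g := cdiff s (S_ (S n))).
  assert (Cg : C1 K g) by (unfold g, cdiff; apply C1_add; auto; apply C1_scal; auto).
  assert (Hg : Rabs (g y - g x) <= 2 * C1norm K g).
  { destruct (N_ge_sup HK g Cg) as [_ P]. pose proof (P y). pose proof (P x).
    pose proof (Rabs_triang (g y) (- g x)) as T. rewrite Rabs_Ropp in T. unfold Rminus. lra. }
  assert (Hg2 : C1norm K g <= (1/2)^(S n) * vd x y / 2).
  { eapply Rle_trans. apply Tail.
    assert (2 / vd x y > 0) by (apply Rdiv_lt_0_compat; lra).
    apply (Rle_trans _ ((1/2)^(S n) / (2 / vd x y))). apply inv_le_div; auto. apply Rlt_le, half_pos. lra.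
    right. field. lra. }
  assert ((1/2)^(S n) <= 1) by (apply (half_mono 0); lia).
  assert (Rabs (S_ (S n) y - S_ (S n) x) <= Rabs (s y - s x) + Rabs (g y - g x)).
  { replace (S_ (S n) y - S_ (S n) x) with ((s y - s x) + - (g y - g x)) by (unfold g, cdiff; ring).
    eapply Rle_trans. apply Rabs_triang. rewrite Rabs_Ropp; lra. }
  rewrite S_INR in Qn. nra.
Qed.

Theorem mainTheorem7 (d : nat) (K : Rd d -> Prop) (HK : compact_Rd K) :
  (J1_Banach K <-> C1_Banach K) /\ (C1_Banach K <-> cond_c K).
Proof.
  pose proof (J1_props HK) as [JA JB].
  assert (EJ : J1_Banach K <-> (forall u : nat -> (KT K -> R) * (KT K -> Rd d), (forall n, J1 K (u n)) ->
    (forall eps, eps > 0 -> exists M, forall n m, (M <= n)%nat -> (M <= m)%nat -> J1norm K (pdiff (u n) (u m)) < eps) ->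
    exists v, J1 K v /\ forall eps, eps > 0 -> exists M, forall n, (M <= n)%nat -> J1norm K (pdiff (u n) v) < eps)).
  { unfold J1_Banach, BanachSpace. split. intros [_ [_ H]]. exact H. intros H. exact (conj JA (conj JB H)). }
  assert (EC : C1_Banach K <-> (forall u : nat -> (KT K -> R), (forall n, C1 K (u n)) ->
    (forall eps, eps > 0 -> exists M, forall n m, (M <= n)%nat -> (M <= m)%nat -> C1norm K (cdiff (u n) (u m)) < eps) ->
    exists v, C1 K v /\ forall eps, eps > 0 -> exists M, forall n, (M <= n)%nat -> C1norm K (cdiff (u n) v) < eps)).
  { unfold C1_Banach, BanachSpace. split. intros [_ [_ H]]. exact H. intros H.
    split; [split; [|split]|split; [split; [|split; [|split; [|split]]]|]].
    - apply C1_zero.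
    - intros; apply C1_add; auto.
    - intros; apply C1_scal; auto.
    - apply N_zero; auto.
    - intros; apply N_nonneg; auto.
    - intros; apply N_def; auto.
    - intros; apply N_scal; auto.
    - intros; apply N_triangle; auto.
    - exact H. }
  rewrite EJ, EC. split; split; intros H.
  - apply J1_to_C1; auto.
  - apply c_to_J1; auto. apply C1_to_c; auto.
  - apply C1_to_c; auto.
  - apply J1_to_C1; auto. apply c_to_J1; auto.
Qed.
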